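(* Let $S$ be a solid and let $x\in S^*$ with $x=a+e(x)$ for some $a\in S$ with $e(a)=0$. Then (1) $e(x)<|a|$; and (2) $e(x)a^{-1}=e(x)x^{-1}=e(u(x))$.
   Context: A solid is a set $S$ with two binary operations $+$ and $\cdot$ (written $xy$) and a binary relation $\le$ satisfying the following axioms (all variables range over $S$). (A1) $+$ is associative and commutative. (A2) For each $x$ there is $e$ with $x+e=x$ such that $e+f=e$ for every $f$ with $x+f=x$; this $e$ is unique and is denoted $e(x)$ (the magnitude of $x$). An element $x$ with $x=e(x)$ is called a magnitude. (A3) For each $x$ there is $s$ with $x+s=e(x)$ and $e(s)=e(x)$; it is unique and denoted $-x$; write $x-y$ for $x+(-y)$. (A4) $e(x+y)=e(x)$ or $e(x+y)=e(y)$. (M1) $\cdot$ is associative and commutative. (M2) For each $x\neq e(x)$ there is $u$ with $xu=x$ such that $uv=u$ for every $v$ with $xv=x$; it is unique and denoted $u(x)$. (M3) For each $x\ne e(x)$ there is $d$ with $xd=u(x)$ and $u(d)=u(x)$; it is unique and denoted $x^{-1}$; write $y/x$ for $yx^{-1}$. (M4) If $x\neq e(x)$ and $y\ne e(y)$ then $u(xy)=u(x)$ or $u(xy)=u(y)$. (O1) $\le$ is a total order (reflexive, antisymmetric, transitive, total); $x<y$ means $x\le y$ and $x\ne y$. (O2) $x\le y\Rightarrow x+z\le y+z$. (O3) $y+e(x)=e(x)\Rightarrow (y\le e(x)$ and $-y\le e(x))$. (O4) $(e(x)<x$ and $y\le z)\Rightarrow xy\le xz$. (O5) $e(y)\le y\le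 z\Rightarrow e(x)y\le e(x)z$. (AM1) For all $x,y$ there is $z$ with $e(x)y=e(z)$. (AM2) $e(xy)=e(x)y+e(y)x$. (AM3) If $x\ne e(x)$ then $e(u(x))=e(x)/x$. (AM4) (distributivity axiom) $xy+xz=x(y+z)+e(x)y+e(x)z$. (AM5) $-(xy)=(-x)y$. (E1) There is $m$ with $m+x=x$ for all $x$; it is unique, called zero and denoted $0$. (E2) There is $u$ with $ux=x$ for all $x$; it is unique, called one and denoted $1$. (E3) There is $M$ with $e(x)+M=M$ for all $x$. (E4) There is $x$ with $e(x)\ne 0$ and $e(x)\ne M$. (E5) For every $x$ there is $a$ with $x=a+e(x)$ and $e(a)=0$. (E6) If $x,y$ are magnitudes with $x<y$, there is $z$ with $z\ne e(z)$ and $x<z<y$. Further notation: $S^*=\{x\in S: x\ne e(x)\}$ (zeroless elements). $x$ is positive if $e(x)\le x$ and negative if $x<e(x)$; $|x|=x$ if $x$ is positive and $|x|=-x$ if $x$ is negative. $x$ is precise if $e(x)=0$. The relative uncertainty $R(x)$ is $e(u(x))$ if $x\ne e(x)$, and $M$ (from (E3)) if $x=e(x)$. *)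

(* Defs.v *)
From Stdlib Require Import Classical ClassicalEpsilon.

Set Implicit Arguments.

Record solid := Solid {
  car :> Type;
  add : car -> car -> car;
  mul : car -> car -> car;
  le  : car -> car -> Prop;
  (* the (partially) defined operations of the axioms, as functions *)
  mag : car -> car;          (* e(x)  *)
  opp : car -> car;
  unt : car -> car;          (* u(x), meaningful for x in S* *)
  inv : car -> car;          (* x^-1, meaningful for x in S* *)
  zero : car;
  one  : car;
  addA : forall x y z, add x (add y z) = add (add x y) z;
  addC : forall x y, add x y = add y x;
  magP : forall x, add x (mag x) = x /\
           (forall f, add x f = x -> add (mag x) f = mag x);
  magU : forall x e', add x e' = x ->
           (forall f, add x f = x -> add e' f = e') -> e' = mag x;
  oppP : forall x, add x (opp x) = mag x /\ mag (opp x) = mag x;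
  oppU : forall x s, add x s = mag x -> mag s = mag x -> s = opp x;
  A4 : forall x y, mag (add x y) = mag x \/ mag (add x y) = mag y;
  mulA : forall x y z, mul x (mul y z) = mul (mul x y) z;
  mulC : forall x y, mul x y = mul y x;
  untP : forall x, x <> mag x -> mul x (unt x) = x /\
           (forall v, mul x v = x -> mul (unt x) v = unt x);
  untU : forall x u', x <> mag x -> mul x u' = x ->
           (forall v, mul x v = x -> mul u' v = u') -> u' = unt x;
  (* (M3): u(d) is only defined for zeroless d *)
  invP : forall x, x <> mag x ->
           mul x (inv x) = unt x /\ inv x <> mag (inv x) /\ unt (inv x) = unt x;
  invU : forall x d, x <> mag x -> mul x d = unt x -> d <> mag d ->
           unt d = unt x -> d = inv x;
  (* (M4): u(xy) is only defined for zeroless xy *)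
  M4 : forall x y, x <> mag x -> y <> mag y ->
         mul x y <> mag (mul x y) /\
         (unt (mul x y) = unt x \/ unt (mul x y) = unt y);
  le_refl : forall x, le x x;
  le_antisym : forall x y, le x y -> le y x -> x = y;
  le_trans : forall x y z, le x y -> le y z -> le x z;
  le_total : forall x y, le x y \/ le y x;
  O2 : forall x y z, le x y -> le (add x z) (add y z);
  O3 : forall x y, add y (mag x) = mag x -> le y (mag x) /\ le (opp y) (mag x);
  O4 : forall x y z, (le (mag x) x /\ mag x <> x) -> le y z ->
         le (mul x y) (mul x z);
  O5 : forall x y z, le (mag y) y -> le y z ->
         le (mul (mag x) y) (mul (mag x) z);
  AM1 : forall x y, exists z, mul (mag x) y = mag z;
  AM2 : forall x y, mag (mul x y) = add (mul (mag x) y) (mul (mag y) x);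
  AM3 : forall x, x <> mag x -> mag (unt x) = mul (mag x) (inv x);
  AM4 : forall x y z, add (mul x y) (mul x z) =
          add (add (mul x (add y z)) (mul (mag x) y)) (mul (mag x) z);
  AM5 : forall x y, opp (mul x y) = mul (opp x) y;
  zeroP : forall x, add zero x = x;
  oneP  : forall x, mul one x = x;
  E34 : exists M, (forall x, add (mag x) M = M) /\
          exists x, mag x <> zero /\ mag x <> M;
  E5 : forall x, exists a, x = add a (mag x) /\ mag a = zero;
  E6 : forall x y, x = mag x -> y = mag y -> (le x y /\ x <> y) ->
         exists z, z <> mag z /\ (le x z /\ x <> z) /\ (le z y /\ z <> y)
}.

Arguments add {s0}.
Arguments mul {s0}.
Arguments le {s0}.
Arguments mag {s0}.
Arguments opp {s0}.
Arguments unt {s0}.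
Arguments inv {s0}.

Definition lt {S : solid} (x y : S) : Prop := le x y /\ x <> y.

Definition absv {S : solid} (x : S) : S :=
  if excluded_middle_informative (le (mag x) x) then x else opp x.

(* Main.v *)
Require Import Defs.
From Stdlib Require Import Classical ClassicalEpsilon.
Arguments addA {s0}.
Arguments addC {s0}.
Arguments magP {s0}.
Arguments magU {s0}.
Arguments oppP {s0}.
Arguments oppU {s0}.
Arguments A4 {s0}.
Arguments mulA {s0}.
Arguments mulC {s0}.
Arguments untP {s0}.
Arguments untU {s0}.
Arguments invP {s0}.
Arguments invU {s0}.
Arguments M4 {s0}.
Arguments le_refl {s0}.
Arguments le_antisym {s0}.
Arguments le_trans {s0}.
Arguments le_total {s0}.
Arguments O2 {s0}.
Arguments O3 {s0}.
Arguments O4 {s0}.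
Arguments O5 {s0}.
Arguments AM1 {s0}.
Arguments AM2 {s0}.
Arguments AM3 {s0}.
Arguments AM4 {s0}.
Arguments AM5 {s0}.
Arguments zeroP {s0}.
Arguments oneP {s0}.
Arguments E5 {s0}.

Lemma add0l {S : solid} (x : S) : add (zero S) x = x.
Proof. apply zeroP. Qed.
Lemma add0r {S : solid} (x : S) : add x (zero S) = x.
Proof. rewrite addC; apply zeroP. Qed.
Lemma mul1l {S : solid} (x : S) : mul (one S) x = x.
Proof. apply oneP. Qed.
Lemma mul1r {S : solid} (x : S) : mul x (one S) = x.
Proof. rewrite mulC; apply oneP. Qed.

Lemma magmag_add {S : solid} (x : S) : add (mag x) (mag x) = mag x.
Proof. destruct (magP x) as [H1 H2]. apply H2. exact H1. Qed.

Lemma mag_mag {S : solid} (x : S) : mag (mag x) = mag x.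
Proof.
  symmetry. apply magU. apply magmag_add. intros f Hf; exact Hf.
Qed.

Lemma mag0 {S : solid} : mag (zero S) = zero S.
Proof. destruct (magP (zero S)) as [H1 _]. rewrite add0l in H1. exact H1. Qed.

Lemma mag_opp {S : solid} (x : S) : mag (opp x) = mag x.
Proof. apply (oppP x). Qed.

Lemma opp_magn {S : solid} (m : S) : mag m = m -> opp m = m.
Proof.
  intro Hm. symmetry. apply oppU. rewrite Hm. pattern m at 3; rewrite <- Hm.
  rewrite <- (magmag_add m). rewrite Hm. reflexivity. reflexivity.
Qed.

Lemma opp0 {S : solid} : opp (zero S) = zero S.
Proof. apply opp_magn, mag0. Qed.

Lemma oppK {S : solid} (x : S) : opp (opp x) = x.
Proof.
  symmetry. apply oppU. rewrite addC, (proj1 (oppP x)), mag_opp. reflexivity.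
  rewrite mag_opp; reflexivity.
Qed.

Lemma magmul {S : solid} (x y : S) : mag (mul (mag x) y) = mul (mag x) y.
Proof. destruct (AM1 x y) as [z Hz]. rewrite Hz. apply mag_mag. Qed.

Lemma le0mag {S : solid} (m : S) : mag m = m -> le (zero S) m.
Proof. intro Hm. rewrite <- Hm. apply (O3 m (zero S)). apply add0l. Qed.

Lemma absorb_le {S : solid} (t m : S) : mag m = m -> add t m = m -> le t m.
Proof. intros Hm H. rewrite <- Hm. apply (O3 m t). rewrite Hm. exact H. Qed.

Lemma magmax {S : solid} (m1 m2 : S) :
  mag m1 = m1 -> mag m2 = m2 -> le m1 m2 -> add m1 m2 = m2.
Proof.
  intros H1 H2 H. apply le_antisym.
  - pose proof (O2 m1 m2 m2 H) as H'. pose proof (magmag_add m2) as E.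
    rewrite H2 in E. rewrite E in H'. exact H'.
  - pose proof (O2 _ _ m2 (le0mag m1 H1)) as H'. rewrite add0l in H'. exact H'.
Qed.

Lemma part1 {S : solid} (y b : S) :
  y <> mag y -> y = add b (mag y) -> mag b = zero S -> lt (mag y) (absv b).
Proof.
  intros hy hyb hb.
  assert (Hm : mag (mag y) = mag y) by apply mag_mag.
  assert (key : ~ le (absv b) (mag y)).
  { intro Hle. apply hy. rewrite hyb at 1.
    unfold absv in Hle. destruct (excluded_middle_informative (le (mag b) b)) as [Hp|Hn].
    - rewrite hb in Hp. apply le_antisym.
      + pose proof (O2 _ _ (mag y) Hle) as H'. rewrite magmag_add in H'. exact H'.
      + pose proof (O2 _ _ (mag y) Hp) as H'. rewrite add0l in H'. exact H'.
    - assert (Hb0 : le b (mag b)).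
      { destruct (le_total b (mag b)) as [h|h]; [exact h| contradiction]. }
      assert (H0 : le (zero S) (opp b)).
      { pose proof (O2 _ _ (opp b) Hb0) as H'. rewrite (proj1 (oppP b)) in H'.
        rewrite hb, add0l in H'. exact H'. }
      assert (E : add (opp b) (mag y) = mag y).
      { apply le_antisym.
        + pose proof (O2 _ _ (mag y) Hle) as H'. rewrite magmag_add in H'. exact H'.
        + pose proof (O2 _ _ (mag y) H0) as H'. rewrite add0l in H'. exact H'. }
      rewrite <- E at 1. rewrite addA, (proj1 (oppP b)), hb, add0l. reflexivity. }
  split.
  - destruct (le_total (mag y) (absv b)) as [h|h]; [exact h | contradiction].
  - intro E. apply key. rewrite <- E. apply le_refl.
Qed.

Lemma mulNl {S : solid} (y z : S) : mul (opp y) z = opp (mul y z).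
Proof. symmetry; apply AM5. Qed.
Lemma mulNr {S : solid} (y z : S) : mul y (opp z) = opp (mul y z).
Proof. rewrite (mulC y), mulNl, (mulC z); reflexivity. Qed.

Lemma mul00 {S : solid} : mul (zero S) (zero S) = zero S.
Proof.
  assert (Hlo : le (zero S) (mul (zero S) (zero S))).
  { apply le0mag. pose proof (magmul (zero S) (zero S)) as H. rewrite mag0 in H. exact H. }
  apply le_antisym; [|exact Hlo].
  assert (Hr : le (mag (zero S)) (zero S)) by (rewrite mag0; apply le_refl).
  destruct (le_total (zero S) (one S)) as [h|h].
  - pose proof (O5 (zero S) (zero S) (one S) Hr h) as H. rewrite mag0, mul1r in H. exact H.
  - pose proof (O2 _ _ (opp (one S)) h) as H. rewrite (proj1 (oppP (one S))), add0l in H.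
    assert (H2 : le (zero S) (opp (one S))).
    { apply le_trans with (mag (one S)); [apply le0mag, mag_mag| exact H]. }
    pose proof (O5 (zero S) (zero S) _ Hr H2) as H3. rewrite mag0 in H3.
    rewrite (mulC _ (opp (one S))), mulNl, mul1l, opp0 in H3. exact H3.
Qed.

Lemma mul_prec0 {S : solid} (p : S) : mag p = zero S -> mul p (zero S) = zero S.
Proof.
  intro hp. pose proof (AM4 p (one S) (zero S)) as H.
  rewrite add0r, mul1r, hp, mul1r, mul00, add0r, add0r in H.
  pose proof (proj2 (magP p) _ H) as H2. rewrite hp, add0l in H2. exact H2.
Qed.

Lemma mul0_prec {S : solid} (p : S) : mag p = zero S -> mul (zero S) p = zero S.
Proof. intro hp. rewrite mulC. apply mul_prec0, hp. Qed.

Lemma absv_cases {S : solid} (y : S) : absv y = y \/ absv y = opp y.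
Proof. unfold absv. destruct (excluded_middle_informative _); auto. Qed.

Lemma absv_prec {S : solid} (y : S) : mag y = zero S -> mag (absv y) = zero S.
Proof. intro h. destruct (absv_cases y) as [E|E]; rewrite E; [exact h| rewrite mag_opp; exact h]. Qed.

Lemma mul0_mag {S : solid} (y : S) : y <> mag y -> mul (zero S) (mag y) = zero S.
Proof.
  intro hy. destruct (E5 y) as [b [hyb hb]].
  pose proof (part1 y b hy hyb hb) as [Hle _].
  assert (Hr : le (mag (mag y)) (mag y)) by (rewrite mag_mag; apply le_refl).
  pose proof (O5 (zero S) _ _ Hr Hle) as H. rewrite mag0, (mul0_prec (absv b) (absv_prec b hb)) in H.
  apply le_antisym; [exact H|]. apply le0mag.
  pose proof (magmul (zero S) (mag y)) as H2. rewrite mag0 in H2. exact H2.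
Qed.

Lemma mul0_zl {S : solid} (y : S) : y <> mag y -> mul (zero S) y = zero S.
Proof.
  intro hy. destruct (E5 y) as [b [hyb hb]].
  pose proof (AM4 (zero S) b (mag y)) as H.
  rewrite <- hyb, mag0, (mul0_prec b hb), (mul0_mag y hy), !add0r in H.
  symmetry; exact H.
Qed.

Lemma F3 {S : solid} (y : S) : y <> mag y -> mul (mag y) (unt y) = mag y.
Proof.
  intro hy. pose proof (AM2 y (unt y)) as H.
  rewrite (proj1 (untP y hy)), (AM3 y hy) in H.
  rewrite <- mulA, (mulC (inv y) y), (proj1 (invP y hy)) in H.
  pose proof (magmag_add (mul (mag y) (unt y))) as H2. rewrite magmul in H2.
  rewrite H2 in H. symmetry; exact H.
Qed.

Lemma one_zl {S : solid} (x : S) : x <> mag x -> one S <> mag (one S).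
Proof.
  intros hx H. apply hx.
  assert (E : x = mul (mag (one S)) x) by (rewrite <- H; symmetry; apply mul1l).
  rewrite E at 2. rewrite magmul. exact E.
Qed.

Lemma mag1 {S : solid} : one S <> mag (one S) -> mag (one S) = zero S.
Proof.
  intro h1. destruct (E5 (one S)) as [b [h1b hb]].
  pose proof (part1 _ b h1 h1b hb) as [Hle _].
  set (E := mag (one S)) in *.
  pose proof (AM2 (one S) b) as H. rewrite mul1l, hb, mul1r, add0r in H.
  fold E in H.
  assert (HEabs : mul E (absv b) = zero S).
  { destruct (absv_cases b) as [Q|Q]; rewrite Q; [| rewrite mulNr]; rewrite <- H; [reflexivity| apply opp0]. }
  assert (Hr : le (mag E) E) by (unfold E; rewrite mag_mag; apply le_refl).
  pose proof (O5 (one S) E _ Hr Hle) as H2. fold E in H2. rewrite HEabs in H2.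
  assert (HEE : mul E E = zero S).
  { apply le_antisym; [exact H2|]. apply le0mag. apply magmul. }
  pose proof (AM4 E b E) as H3.
  assert (HmE : mag E = E) by apply mag_mag.
  rewrite HmE, <- H, HEE, <- h1b, mul1r, !add0r in H3.
  symmetry; exact H3.
Qed.

Lemma le01 {S : solid} : one S <> mag (one S) -> le (zero S) (one S).
Proof.
  intro h1. pose proof (mag1 h1) as hm1.
  destruct (le_total (zero S) (one S)) as [h|h]; [exact h| exfalso].
  pose proof (O2 _ _ (opp (one S)) h) as H. rewrite (proj1 (oppP (one S))), add0l, hm1 in H.
  assert (Hm : mag (opp (one S)) = zero S) by (rewrite mag_opp; exact hm1).
  assert (Hnz : mag (opp (one S)) <> opp (one S)).
  { rewrite Hm. intro E. apply h1. rewrite hm1. rewrite <- (oppK (one S)), <- E. apply opp0. }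
  assert (Hp : le (mag (opp (one S))) (opp (one S))) by (rewrite Hm; exact H).
  pose proof (O4 _ _ _ (conj Hp Hnz) h) as H2.
  rewrite mul1r, (mul_prec0 _ Hm) in H2.
  apply Hnz. rewrite Hm. apply le_antisym; assumption.
Qed.

Lemma magunt_prec {S : solid} (a : S) : a <> mag a -> mag a = zero S -> mag (unt a) = zero S.
Proof.
  intros hz ha. rewrite (AM3 a hz), ha. apply mul0_zl. apply (proj1 (proj2 (invP a hz))).
Qed.

Lemma inv_prec {S : solid} (a : S) : a <> mag a -> mag a = zero S -> mag (inv a) = zero S.
Proof.
  intros hz ha. destruct (invP a hz) as [Hi1 [Hi2 Hi3]].
  pose proof (AM2 a (inv a)) as H. rewrite Hi1, (magunt_prec a hz ha), ha, (mul0_zl _ Hi2), add0l in H.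
  rewrite <- (F3 _ Hi2), Hi3, <- Hi1, mulA, <- H. apply mul0_zl, Hi2.
Qed.

Lemma unt_prec {S : solid} (a : S) : a <> mag a -> mag a = zero S -> unt a = one S.
Proof.
  intros hz ha. pose proof (magunt_prec a hz ha) as hu0.
  destruct (untP a hz) as [H1 H2]. pose proof (H2 _ H1) as huu.
  set (u := unt a) in *.
  assert (huz : u <> mag u).
  { intro E. apply hz. rewrite hu0 in E. transitivity (mul a u); [symmetry; exact H1|]. rewrite E, (mul_prec0 a ha), ha. reflexivity. }
  pose proof (AM4 u (one S) (opp u)) as H.
  rewrite mul1r, mulNr, huu, (proj1 (oppP u)), hu0, mul1r in H.
  assert (Hmo : mag (opp u) = zero S) by (rewrite mag_opp; exact hu0).
  rewrite (mul0_prec _ Hmo), !add0r in H.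
  destruct (classic (add (one S) (opp u) = mag (add (one S) (opp u)))) as [Ec|Ec].
  - assert (Hc : add (one S) (opp u) = zero S).
    { rewrite Ec. destruct (A4 (one S) (opp u)) as [Q|Q]; rewrite Q; [|exact Hmo].
      apply mag1. apply (one_zl a hz). }
    assert (E2 : add (one S) (add u (opp u)) = add u (add (one S) (opp u))).
    { rewrite !addA, (addC (one S) u). reflexivity. }
    rewrite (proj1 (oppP u)), hu0, Hc, !add0r in E2. symmetry; exact E2.
  - exfalso. destruct (M4 u _ huz Ec) as [Hn _]. apply Hn. rewrite <- H. symmetry; apply mag0.
Qed.

Theorem mainTheorem10 (S : solid) (x a : S)
  (hx : x <> mag x) (hxa : x = add a (mag x)) (ha : mag a = zero S) :
  lt (mag x) (absv a) /\
  mul (mag x) (inv a) = mul (mag x) (inv x) /\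
  mul (mag x) (inv x) = mag (unt x).
Proof.
  pose proof (part1 x a hx hxa ha) as P1.
  split; [exact P1|]. split; [| symmetry; apply AM3, hx].
  assert (haz : a <> mag a).
  { intro E. apply hx. rewrite ha in E. rewrite hxa at 1. rewrite E, add0l. reflexivity. }
  pose proof (one_zl x hx) as h1. pose proof (mag1 h1) as hm1. pose proof (le01 h1) as h01.
  destruct (invP a haz) as [Hi1 [Hi2 Hi3]].
  pose proof (inv_prec a haz ha) as hip.
  pose proof (unt_prec a haz ha) as hua.
  assert (Hia : mul (inv a) a = one S) by (rewrite mulC, Hi1; exact hua).
  pose proof (mul0_mag x hx) as HN0.
  set (N := mag x) in *.
  set (K := mul N (inv a)).
  assert (HK : mag K = K) by apply magmul.
  assert (Hw : mul x (inv a) = add (one S) K).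
  { pose proof (AM4 (inv a) a N) as H.
    rewrite Hia, hip, (mul0_prec a ha), HN0, !add0r, <- hxa in H.
    rewrite (mulC x (inv a)), <- H. unfold K. rewrite (mulC N). reflexivity. }
  destruct (M4 x (inv a) hx Hi2) as [hwz _].
  set (w := mul x (inv a)) in *.
  assert (HeW : mag w = K).
  { unfold w. rewrite AM2, hip, (mul0_zl x hx), add0r. reflexivity. }
  assert (Hxw : mul w a = x).
  { unfold w. rewrite <- mulA, Hia, mul1r. reflexivity. }
  assert (HL : mul N (inv x) = mag (unt x)) by (symmetry; apply AM3, hx).
  destruct (proj2 (M4 w a hwz haz)) as [Q|Q]; rewrite Hxw in Q.
  -
    rewrite HL, Q, (AM3 w hwz), HeW.
    assert (HK1 : le K (one S)).
    { assert (Hpos : le (mag (absv (inv a))) (absv (inv a)) /\ mag (absv (inv a)) <> absv (inv a)).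
      { rewrite (absv_prec _ hip). unfold absv.
        destruct (excluded_middle_informative (le (mag (inv a)) (inv a))) as [Hp|Hn].
        - rewrite hip in Hp. split; [exact Hp|]. intro E. apply Hi2. rewrite hip. symmetry; exact E.
        - assert (Hb0 : le (inv a) (mag (inv a))).
          { destruct (le_total (inv a) (mag (inv a))) as [h|h]; [exact h| contradiction]. }
          pose proof (O2 _ _ (opp (inv a)) Hb0) as H'. rewrite (proj1 (oppP (inv a))), hip, add0l in H'.
          split; [exact H'|]. intro E. apply Hi2. rewrite hip, <- (oppK (inv a)), <- E. apply opp0. }
      pose proof (O4 _ _ _ Hpos (proj1 P1)) as H.
      assert (E1 : mul (absv (inv a)) N = K).
      { unfold K. rewrite (mulC _ N). destruct (absv_cases (inv a)) as [E|E]; rewrite E; [reflexivity|].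
        rewrite mulNr. apply opp_magn, HK. }
      rewrite E1 in H.
      assert (E2 : mul (absv (inv a)) (absv a) = one S \/ mul (absv (inv a)) (absv a) = opp (one S)).
      { destruct (absv_cases (inv a)) as [E|E]; destruct (absv_cases a) as [F|F]; rewrite E, F;
          rewrite ?mulNl, ?mulNr, ?oppK, Hia; auto. }
      destruct E2 as [E2|E2]; rewrite E2 in H; [exact H|].
      exfalso. pose proof (le_trans _ _ _ (le0mag K HK) H) as H2.
      pose proof (O2 _ _ (one S) H2) as H3. rewrite add0l, addC, (proj1 (oppP (one S))), hm1 in H3.
      apply h1. rewrite hm1. apply le_antisym; assumption. }
    assert (HKK : add K (mul K K) = K).
    { rewrite addC. apply magmax.
      - pose proof (magmul K K) as H. rewrite HK in H. exact H.
      - exact HK.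
      - assert (Hr : le (mag K) K) by (rewrite HK; apply le_refl).
        pose proof (O5 K K (one S) Hr HK1) as H. rewrite HK, mul1r in H. exact H. }
    assert (HKw : mul K w = K).
    { rewrite Hw. apply le_antisym.
      - pose proof (AM4 K (one S) K) as H. rewrite HK, mul1r, HKK, <- addA, HKK in H.
        apply absorb_le; [exact HK| symmetry; exact H].
      - assert (H1w : le (one S) (add (one S) K)).
        { pose proof (O2 _ _ (one S) (le0mag K HK)) as H. rewrite add0l, addC in H. exact H. }
        assert (Hr : le (mag (one S)) (one S)) by (rewrite hm1; exact h01).
        pose proof (O5 K _ _ Hr H1w) as H. rewrite HK, mul1r in H. exact H. }
    pose proof (F3 w hwz) as H. rewrite HeW, <- (proj1 (invP w hwz)), mulA, HKw in H.
    symmetry; exact H.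
  -
    rewrite hua in Q.
    assert (HL0 : mul N (inv x) = zero S) by (rewrite HL, Q; exact hm1).
    assert (HN : N = zero S).
    { change (mag x = zero S). rewrite <- (F3 x hx). rewrite <- (proj1 (invP x hx)), (mulC x (inv x)), mulA; change (mul (mul N (inv x)) x = zero S); rewrite HL0.
      apply mul0_zl, hx. }
    rewrite HL0. unfold K. rewrite HN. apply mul0_zl, Hi2.
Qed.
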